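(* Let $A \in \mathbb{Q}^{m\times n}$ and let $k \le n$ be a positive integer. If $\operatorname{spark}(A) > k$, then there exists a constant $\varepsilon > 0$ with encoding length polynomially bounded by that of $A$ such that $\|Ax\|_2^2 \ge \varepsilon\|x\|_2^2$ for all $x \in \mathbb{R}^n$ with $\|x\|_0 \le k$.
   Context: $\operatorname{spark}(A) := \min\{\|x\|_0 : Ax = 0,\ x\ne 0\}$, where $\|x\|_0$ is the number of nonzero entries of $x$; $\|\cdot\|_2$ is the Euclidean norm. Encoding length refers to binary encoding length of rational numbers. *)

(* Defs.v *)
From HB Require Import structures.
From mathcomp Require Import all_boot all_order all_algebra.
From mathcomp Require Import reals.
Set Implicit Arguments. Unset Strict Implicit. Unset Printing Implicit Defensive.
Import Order.TTheory GRing.Theory Num.Theory.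
Local Open Scope ring_scope.

Definition nnz (R : ringType) (n : nat) (x : 'cV[R]_n) : nat :=
  #|[set i : 'I_n | x i ord0 != 0]|.

Definition sqnorm2 (R : ringType) (n : nat) (x : 'cV[R]_n) : R :=
  \sum_(i < n) x i ord0 ^+ 2.

(* spark(A) > k, i.e. min{ ||x||_0 : A x = 0, x <> 0 } > k, with the
   convention min(empty) = +infinity: every nonzero kernel vector has more
   than k nonzero entries. *)
Definition spark_gt (m n : nat) (A : 'M[rat]_(m, n)) (k : nat) : Prop :=
  forall x : 'cV[rat]_n, x != 0 -> A *m x = 0 -> (k < nnz x)%N.

(* Binary encoding length (Schrijver's convention):
   <z> = 1 + ceil(log2(|z|+1)) for integers, <p/q> = <p> + <q> for a
   rational in lowest terms, <A> = m n + sum of the entry sizes. *)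
Definition enc_int (z : int) : nat := (1 + up_log 2 `|z|%N.+1)%N.
Definition enc_rat (r : rat) : nat := (enc_int (numq r) + enc_int (denq r))%N.
Definition enc_mx (m n : nat) (A : 'M[rat]_(m, n)) : nat :=
  (m * n + \sum_(i < m) \sum_(j < n) enc_rat (A i j))%N.

(* Main.v *)
Require Import Defs.
From HB Require Import structures.
From mathcomp Require Import all_boot all_order all_algebra.
From mathcomp Require Import perm reals ring lra zify.
Import Order.TTheory GRing.Theory Num.Theory.
Set Implicit Arguments. Unset Strict Implicit. Unset Printing Implicit Defensive.
Lemma leq_pow x y e : x <= y -> x ^ e <= y ^ e.
Proof. by move=> h; elim: e => // e IH; rewrite !expnS leq_mul. Qed.

Lemma fact_pow p : p`! <= p ^ p.
Proof.
elim: p => // p IH; rewrite factS expnS leq_mul //.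
apply: leq_trans IH _; apply: leq_pow; exact: leqnSn.
Qed.

Lemma pow_mono a b x y : 0 < x -> a <= x -> b <= y -> a ^ b <= x ^ y.
Proof.
move=> x0 ha hb; apply: (@leq_trans (x ^ b)); first exact: leq_pow.
exact: leq_pexp2l.
Qed.

Lemma nat_bound N n m d : 0 < N -> n <= N -> m <= N -> d <= 2 ^ N ->
  n * n * ((n.-1)`! * (m * 2 ^ N * 2 ^ N + 1) ^ n.-1) ^ 2 * (n * m * (2 ^ N * 2 ^ N))
  * (d * d) <= 2 ^ (18 * N * N).
Proof.
move=> N0 hn hm hd.
have hN : N <= 2 ^ N by apply: ltnW; apply: ltn_expl.
have hn2 : n <= 2 ^ N by apply: leq_trans hN.
have hm2 : m <= 2 ^ N by apply: leq_trans hN.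
have p0 : 0 < 2 ^ N by rewrite expn_gt0.
have hf : (n.-1)`! <= 2 ^ (N * N).
  rewrite expnM; apply: leq_trans (fact_pow _) _.
  apply: pow_mono => //; lia.
have hL : m * 2 ^ N * 2 ^ N + 1 <= 2 ^ (4 * N).
  have h3 : m * 2 ^ N * 2 ^ N <= 2 ^ (3 * N).
    rewrite (mulnC 3) expnM expnS expnS expn1 -mulnA.
    by apply: leq_mul => //.
  apply: (@leq_trans (2 ^ (3 * N) * 2)).
    have : 0 < 2 ^ (3 * N) by rewrite expn_gt0.
    lia.
  rewrite -expnSr; apply: leq_pexp2l => //; lia.
have hLp : (m * 2 ^ N * 2 ^ N + 1) ^ n.-1 <= 2 ^ (4 * N * N).
  rewrite expnM; apply: pow_mono; first by rewrite expn_gt0.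
    exact: hL.
  lia.
apply: (@leq_trans (2 ^ N * 2 ^ N * (2 ^ (N * N) * 2 ^ (4 * N * N)) ^ 2
   * (2 ^ N * 2 ^ N * (2 ^ N * 2 ^ N)) * (2 ^ N * 2 ^ N))).
  repeat apply: leq_mul => //; apply: leq_pow; exact: leq_mul.
rewrite -!expnD -expnM -!expnD; apply: leq_pexp2l => //; nia.
Qed.

Local Open Scope ring_scope.

Definition frob (R : pzRingType) p q (C : 'M[R]_(p, q)) : R :=
  \sum_i \sum_j C i j ^+ 2.

Lemma frob_bound (R : realDomainType) p q (C : 'M[R]_(p, q)) (L : R) :
  (forall i j, `|C i j| <= L) -> frob C <= (p * q)%:R * L ^+ 2.
Proof.
move=> HC; rewrite /frob.
have -> : (p * q)%:R * L ^+ 2 = \sum_(i : 'I_p) \sum_(j : 'I_q) L ^+ 2.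
  by rewrite !sumr_const !card_ord -mulrnA mulr_natl mulnC.
apply: ler_sum => i _; apply: ler_sum => j _.
rewrite -real_normK ?num_real // expr2 expr2.
by apply: ler_pM => //; exact: HC.
Qed.

Lemma frob_ge0 (R : realDomainType) p q (C : 'M[R]_(p, q)) : 0 <= frob C.
Proof. by apply: sumr_ge0 => i _; apply: sumr_ge0 => j _; exact: sqr_ge0. Qed.

Lemma frob_map (R : realFieldType) p q (C : 'M[int]_(p, q)) :
  frob (map_mx (fun z => z%:~R : R) C) = (frob C)%:~R.
Proof.
rewrite /frob rmorph_sum; apply: eq_bigr => i _.
rewrite rmorph_sum; apply: eq_bigr => j _.
by rewrite mxE rmorphXn.
Qed.
Lemma CS (R : realFieldType) p (c y : 'I_p -> R) :
  (\sum_j c j * y j) ^+ 2 <= (\sum_j c j ^+ 2) * (\sum_j y j ^+ 2).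
Proof.
have H : 0 <= \sum_j \sum_l (c j * y l - c l * y j) ^+ 2.
  by apply: sumr_ge0 => j _; apply: sumr_ge0 => l _; exact: sqr_ge0.
have S1 : \sum_j \sum_l c j ^+ 2 * y l ^+ 2 = (\sum_j c j ^+ 2) * (\sum_j y j ^+ 2).
  by rewrite mulr_suml; apply: eq_bigr => j _; rewrite mulr_sumr.
have S2 : \sum_j \sum_l c l ^+ 2 * y j ^+ 2 = (\sum_j c j ^+ 2) * (\sum_j y j ^+ 2).
  by rewrite exchange_big.
have S3 : \sum_j \sum_l (c j * y j) * (c l * y l) = (\sum_j c j * y j) ^+ 2.
  by rewrite expr2 mulr_suml; apply: eq_bigr => j _; rewrite mulr_sumr.
have E : \sum_j \sum_l (c j * y l - c l * y j) ^+ 2 =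
   \sum_j \sum_l c j ^+ 2 * y l ^+ 2 + \sum_j \sum_l c l ^+ 2 * y j ^+ 2
   - 2 * \sum_j \sum_l (c j * y j) * (c l * y l).
  rewrite -big_split /= mulr_sumr -sumrB; apply: eq_bigr => j _.
  rewrite -big_split /= mulr_sumr -sumrB; apply: eq_bigr => l _.
  ring.
move: H; rewrite E S1 S2 S3; lra.
Qed.

Lemma sqnorm_mul (R : realFieldType) p q (C : 'M[R]_(p, q)) (y : 'cV[R]_q) :
  sqnorm2 (C *m y) <= frob C * sqnorm2 y.
Proof.
rewrite /sqnorm2 /frob mulr_suml; apply: ler_sum => i _.
rewrite mxE; exact: CS.
Qed.

Lemma sqnorm_ge0 (R : realFieldType) q (y : 'cV[R]_q) : 0 <= sqnorm2 y.
Proof. by apply: sumr_ge0 => i _; exact: sqr_ge0. Qed.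

Lemma sqnormZ (R : realFieldType) q (a : R) (y : 'cV[R]_q) :
  sqnorm2 (a *: y) = a ^+ 2 * sqnorm2 y.
Proof. by rewrite /sqnorm2 mulr_sumr; apply: eq_bigr => i _; rewrite mxE exprMn. Qed.

Lemma key (R : realFieldType) n m (M : 'M[R]_n) (G : 'M[R]_(n, m))
  (Bx : 'cV[R]_m) (x : 'cV[R]_n) :
  M *m x = G *m Bx -> 1 <= \det M ^+ 2 ->
  sqnorm2 x <= frob (\adj M) * frob G * sqnorm2 Bx.
Proof.
move=> HM Hd.
have E : \det M *: x = \adj M *m (G *m Bx).
  by rewrite -HM mulmxA mul_adj_mx mul_scalar_mx.
have h1 : sqnorm2 x <= sqnorm2 (\det M *: x).
  rewrite sqnormZ -{1}[sqnorm2 x]mul1r; apply: ler_wpM2r => //; exact: sqnorm_ge0.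
apply: le_trans h1 _; rewrite E.
apply: le_trans (sqnorm_mul _ _) _.
rewrite -mulrA; apply: ler_wpM2l; first exact: frob_ge0.
exact: sqnorm_mul.
Qed.
Lemma det_bound p (C : 'M[int]_p) (L : int) :
  0 <= L -> (forall i j, `|C i j| <= L) -> `|\det C| <= (p`!)%:Z * L ^+ p.
Proof.
move=> L0 HC; rewrite /determinant.
apply: le_trans (ler_norm_sum _ _ _) _.
have -> : (p`!)%:Z * L ^+ p = \sum_(s : 'S_p) L ^+ p.
  by rewrite sumr_const card_Sn -mulr_natl natz.
apply: ler_sum => s _.
rewrite normrM normrX normrN normr1 expr1n mul1r normr_prod.
have -> : L ^+ p = \prod_(i : 'I_p) L by rewrite prodr_const card_ord.
apply: ler_prod => i _; rewrite normr_ge0 /=; exact: HC.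
Qed.

Lemma adj_frob_bound p (C : 'M[int]_p) (L : int) :
  0 <= L -> (forall i j, `|C i j| <= L) ->
  frob (\adj C) <= (p * p)%:R * ((p.-1)`!%:Z * L ^+ p.-1) ^+ 2.
Proof.
move=> L0 HC; apply: frob_bound => i j.
rewrite mxE /cofactor normrM normrX normrN normr1 expr1n mul1r.
apply: det_bound => // a b; rewrite !mxE; exact: HC.
Qed.

Definition BS m n (Bz : 'M[int]_(m, n)) (S : {set 'I_n}) : 'M[int]_(m, n) :=
  \matrix_(i, j) (if j \in S then Bz i j else 0).
Definition dS n (S : {set 'I_n}) : 'rV[int]_n := \row_j (j \notin S)%:R.
Definition Mz m n (Bz : 'M[int]_(m, n)) (S : {set 'I_n}) : 'M[int]_n :=
  (BS Bz S)^T *m BS Bz S + diag_mx (dS S).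

Notation fi F := (fun z : int => z%:~R : F).

Lemma BS_supp (F : numFieldType) m n (Bz : 'M[int]_(m, n)) (S : {set 'I_n}) (x : 'cV[F]_n) :
  (forall j, j \notin S -> x j ord0 = 0) ->
  map_mx (fi F) (BS Bz S) *m x = map_mx (fi F) Bz *m x.
Proof.
move=> Hx; apply/matrixP => i a; rewrite !mxE; apply: eq_bigr => j _.
rewrite !mxE; case: ifP => // /negbT jS.
by rewrite (ord1 a) Hx // !mulr0.
Qed.

Lemma diag_supp (F : numFieldType) n (S : {set 'I_n}) (x : 'cV[F]_n) :
  (forall j, j \notin S -> x j ord0 = 0) ->
  diag_mx (map_mx (fi F) (dS S)) *m x = 0.
Proof.
move=> Hx; rewrite mul_diag_mx; apply/matrixP => i a; rewrite !mxE (ord1 a).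
by case: (boolP (i \in S)) => iS /=; rewrite ?mul0r ?Hx ?mulr0.
Qed.

Lemma Mz_supp (F : numFieldType) m n (Bz : 'M[int]_(m, n)) (S : {set 'I_n}) (x : 'cV[F]_n) :
  (forall j, j \notin S -> x j ord0 = 0) ->
  map_mx (fi F) (Mz Bz S) *m x = (map_mx (fi F) (BS Bz S))^T *m (map_mx (fi F) Bz *m x).
Proof.
move=> Hx; rewrite /Mz map_mxD map_mxM map_diag_mx mulmxDl diag_supp // addr0.
by rewrite map_trmx -mulmxA BS_supp.
Qed.

Lemma mapBz (F : numFieldType) m n (A : 'M[rat]_(m, n)) (Bz : 'M[int]_(m, n)) (D : int) :
  (forall i j, (Bz i j)%:~R = D%:~R * A i j) ->
  map_mx (fi F) Bz = (D%:~R : F) *: map_mx ratr A.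
Proof.
move=> HB; apply/matrixP => i j; rewrite !mxE -ratr_int HB rmorphM /=.
by rewrite ratr_int.
Qed.

Lemma mapBzQ m n (A : 'M[rat]_(m, n)) (Bz : 'M[int]_(m, n)) (D : int) :
  (forall i j, (Bz i j)%:~R = D%:~R * A i j) ->
  map_mx (fi rat) Bz = (D%:~R : rat) *: A.
Proof. by move=> HB; apply/matrixP => i j; rewrite !mxE HB. Qed.

Lemma Mz_det m n (A : 'M[rat]_(m, n)) (k : nat) (Bz : 'M[int]_(m, n)) (D : int)
  (S : {set 'I_n}) :
  spark_gt A k -> D != 0 -> (forall i j, (Bz i j)%:~R = D%:~R * A i j) ->
  (#|S| <= k)%N -> \det (Mz Bz S) != 0.
Proof.
move=> Hsp D0 HB HS; apply/negP => /eqP h0.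
have : \det (map_mx (fi rat) (Mz Bz S)) == 0 by rewrite det_map_mx h0 rmorph0.
case/det0P => v v0 vM.
set Bq := map_mx (fi rat) (BS Bz S).
set w := Bq *m v^T.
have E0 : w^T *m w + v *m diag_mx (map_mx (fi rat) (dS S)) *m v^T = 0.
  have H : v *m map_mx (fi rat) (Mz Bz S) *m v^T = 0 by rewrite vM mul0mx.
  rewrite /Mz map_mxD map_mxM map_diag_mx mulmxDr mulmxDl -map_trmx -/Bq in H.
  by rewrite /w trmx_mul trmxK !mulmxA; rewrite !mulmxA in H; exact: H.
have E := congr1 (fun M : 'M[rat]_1 => M ord0 ord0) E0.
move: E; rewrite /= [X in X = _]mxE [X in _ = X]mxE => E.
have E1 : (w^T *m w) ord0 ord0 = \sum_i w i ord0 ^+ 2.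
  by rewrite mxE; apply: eq_bigr => i _; rewrite mxE expr2.
have E2 : (v *m diag_mx (map_mx (fi rat) (dS S)) *m v^T) ord0 ord0 =
          \sum_j (v ord0 j ^+ 2 * (j \notin S)%:R).
  rewrite mul_mx_diag mxE; apply: eq_bigr => j _.
  by rewrite !mxE rmorph_nat expr2 mulrAC.
have P1 : 0 <= \sum_i w i ord0 ^+ 2 by apply: sumr_ge0 => i _; exact: sqr_ge0.
have P2 : 0 <= \sum_j (v ord0 j ^+ 2 * (j \notin S)%:R :> rat).
  by apply: sumr_ge0 => j _; apply: mulr_ge0; [exact: sqr_ge0 | exact: ler0n].
rewrite E1 E2 in E.
have Z1 : \sum_i w i ord0 ^+ 2 = 0.
  lra.
have Z2 : \sum_j (v ord0 j ^+ 2 * (j \notin S)%:R :> rat) = 0.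
  lra.
have Hw : forall i, w i ord0 = 0.
  move=> i; apply/eqP; rewrite -sqrf_eq0; apply/eqP.
  by apply: (psumr_eq0P _ Z1) => // i' _; exact: sqr_ge0.
have Hx : forall j, j \notin S -> v^T j ord0 = 0.
  move=> j jS; rewrite mxE; apply/eqP; rewrite -sqrf_eq0; apply/eqP.
  have : v ord0 j ^+ 2 * (j \notin S)%:R = 0.
    apply: (psumr_eq0P _ Z2) => // j' _.
    by apply: mulr_ge0; [exact: sqr_ge0 | exact: ler0n].
  by rewrite jS mulr1.
have Aw : A *m v^T = 0.
  have : (D%:~R : rat) *: (A *m v^T) = 0.
    rewrite scalemxAl -(mapBzQ HB) -(BS_supp Bz Hx) -/Bq -/w.
    by apply/matrixP => i a; rewrite (ord1 a) Hw mxE.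
  move/eqP; rewrite scaler_eq0 intr_eq0 (negPf D0) /=; by move/eqP.
have := Hsp (v^T) _ Aw; rewrite trmx_eq0 => /(_ v0).
have : (nnz v^T <= #|S|)%N.
  apply: subset_leq_card; apply/subsetP => j; rewrite inE.
  by apply: contraR => jS; rewrite Hx.
move=> h1 h2; have := leq_trans h2 (leq_trans h1 HS); by rewrite ltnn.
Qed.

Lemma real_bound (R : realFieldType) m n (A : 'M[rat]_(m, n)) (k : nat)
  (Bz : 'M[int]_(m, n)) (D : int) (x : 'cV[R]_n) :
  spark_gt A k -> D != 0 -> (forall i j, (Bz i j)%:~R = D%:~R * A i j) ->
  (nnz x <= k)%N ->
  exists S : {set 'I_n}, (#|S| <= k)%N /\
    sqnorm2 x <= ((frob (\adj (Mz Bz S)) * frob (BS Bz S)^T * D ^+ 2)%:~R)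
                 * sqnorm2 (map_mx ratr A *m x).
Proof.
move=> Hsp D0 HB Hk.
pose S := [set j | x j ord0 != 0].
have HS : (#|S| <= k)%N by [].
have Hx : forall j, j \notin S -> x j ord0 = 0.
  by move=> j; rewrite inE negbK => /eqP.
exists S; split => //.
have Hd := Mz_det Hsp D0 HB HS.
have := @key R n m (map_mx (fi R) (Mz Bz S)) (map_mx (fi R) (BS Bz S))^T
  (map_mx (fi R) Bz *m x) x (Mz_supp Bz Hx).
have h1 : (1 : R) <= ((\det (Mz Bz S))%:~R) ^+ 2.
  rewrite expr2 -intrM ler1z; move: Hd; set d := \det (Mz Bz S); lia.
rewrite det_map_mx => /(_ h1).
rewrite -map_mx_adj frob_map map_trmx frob_map (mapBz _ HB) -scalemxAl sqnormZ.
by rewrite !intrM expr2 !mulrA.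
Qed.

Lemma T_bound m n (Bz : 'M[int]_(m, n)) (D : int) (S : {set 'I_n}) (K : int) :
  0 <= K -> (forall i j, `|Bz i j| <= K) ->
  frob (\adj (Mz Bz S)) * frob (BS Bz S)^T * D ^+ 2 <=
  (n * n)%:R * ((n.-1)`!%:Z * (m%:R * K * K + 1) ^+ n.-1) ^+ 2
   * ((n * m)%:R * K ^+ 2) * D ^+ 2.
Proof.
move=> K0 HK.
have HBS : forall i j, `|BS Bz S i j| <= K.
  by move=> i j; rewrite mxE; case: ifP => _; rewrite ?normr0.
have HM : forall i j, `|Mz Bz S i j| <= m%:R * K * K + 1.
  move=> i j; rewrite mxE; apply: le_trans (ler_normD _ _) _.
  apply: lerD.
    rewrite mxE; apply: le_trans (ler_norm_sum _ _ _) _.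
    have -> : m%:R * K * K = \sum_(l < m) K * K.
      by rewrite sumr_const card_ord -mulrA mulr_natl.
    apply: ler_sum => l _; rewrite normrM mxE.
    by apply: ler_pM => //; exact: HBS.
  rewrite mxE mxE; case: (i == j) => /=; rewrite ?mulr1n ?mulr0n ?normr0 //.
  by case: (i \in S).
apply: ler_wpM2r; first exact: sqr_ge0.
apply: ler_pM; [exact: frob_ge0 | exact: frob_ge0 | | ].
  apply: adj_frob_bound => //.
  by apply: addr_ge0 => //; apply: mulr_ge0 => //; apply: mulr_ge0.
apply: frob_bound => i j; rewrite mxE; exact: HBS.
Qed.

Lemma enc_int_bound z : (absz z <= 2 ^ enc_int z)%N.
Proof.
rewrite /enc_int; apply: (@leq_trans (2 ^ up_log 2 `|z|.+1)).
  by apply: ltnW; apply: up_logP.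
by apply: leq_pexp2l => //; rewrite add1n.
Qed.

Lemma enc_num a : (absz (numq a) <= 2 ^ enc_rat a)%N.
Proof.
apply: leq_trans (enc_int_bound _) _; apply: leq_pexp2l => //.
by rewrite /enc_rat leq_addr.
Qed.

Lemma enc_den a : (absz (denq a) <= 2 ^ enc_rat a)%N.
Proof.
apply: leq_trans (enc_int_bound _) _; apply: leq_pexp2l => //.
by rewrite /enc_rat leq_addl.
Qed.

Lemma absz_prod (I : finType) (P : pred I) (F : I -> int) :
  absz (\prod_(i | P i) F i) = (\prod_(i | P i) absz (F i))%N.
Proof. exact: (big_morph _ abszM (erefl _)). Qed.

Lemma prod_exp2 (I : finType) (P : pred I) (F : I -> nat) :
  (\prod_(i | P i) 2 ^ F i = 2 ^ (\sum_(i | P i) F i))%N.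
Proof. by rewrite (big_morph (expn 2) (expnD 2) (expn0 2)). Qed.

Section Constr.
Variables (m n : nat) (A : 'M[rat]_(m, n)).

Definition Dz : int := \prod_(p : 'I_m * 'I_n) denq (A p.1 p.2).
Definition Bzz : 'M[int]_(m, n) :=
  \matrix_(i, j) (numq (A i j) * \prod_(p : 'I_m * 'I_n | p != (i, j)) denq (A p.1 p.2)).
Definition Esum : nat := (\sum_(p : 'I_m * 'I_n) enc_rat (A p.1 p.2))%N.

Lemma HBz i j : (Bzz i j)%:~R = Dz%:~R * A i j.
Proof.
rewrite /Bzz /Dz mxE [in RHS](bigD1 (i, j)) //= !intrM numqE; ring.
Qed.

Lemma Dz_gt0 : 0 < Dz.
Proof. by apply: prodr_gt0 => p _; exact: denq_gt0. Qed.

Lemma Esum_le : (Esum <= enc_mx A)%N.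
Proof. by rewrite /Esum /enc_mx pair_big /= leq_addl. Qed.

Lemma Dz_le : (absz Dz <= 2 ^ Esum)%N.
Proof.
rewrite /Dz absz_prod /Esum -prod_exp2.
by apply: leq_prod => p _; exact: enc_den.
Qed.

Lemma Bz_le i j : (absz (Bzz i j) <= 2 ^ Esum)%N.
Proof.
rewrite /Bzz mxE abszM absz_prod /Esum [in X in (_ <= X)%N](bigD1 (i, j)) //= expnD -prod_exp2.
apply: leq_mul; first exact: enc_num.
by apply: leq_prod => p _; exact: enc_den.
Qed.
End Constr.
Lemma nnz_delta (R : realFieldType) n (i0 : 'I_n) :
  nnz (delta_mx i0 ord0 : 'cV[R]_n) = 1%N.
Proof.
rewrite /nnz; have -> : [set i | (delta_mx i0 ord0 : 'cV[R]_n) i ord0 != 0] = [set i0].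
  apply/setP => i; rewrite !inE !mxE eqxx andbT.
  by case: (i == i0); rewrite /= ?oner_neq0 ?eqxx.
by rewrite cards1.
Qed.

Lemma T_num (N n m d : nat) : (0 < N)%N -> (n <= N)%N -> (m <= N)%N -> (d <= 2 ^ N)%N ->
  (n * n)%:R * ((n.-1)`!%:Z * (m%:R * (2 ^ N)%:Z * (2 ^ N)%:Z + 1) ^+ n.-1) ^+ 2
   * ((n * m)%:R * (2 ^ N)%:Z ^+ 2) * d%:Z ^+ 2 <= (2 ^ (18 * N * N))%:Z.
Proof.
move=> N0 hn hm hd.
have := nat_bound N0 hn hm hd; rewrite -lez_nat.
rewrite -!natz !(natrM, natrX, natrD).
by rewrite !expr2.
Qed.

Theorem lemma5 :
  exists c d : nat,
  forall (m n : nat) (A : 'M[rat]_(m, n)) (k : nat),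
    (0 < k)%N -> (k <= n)%N -> spark_gt A k ->
    exists eps : rat,
      0 < eps /\
      (enc_rat eps <= c * (enc_mx A).+1 ^ d)%N /\
      forall (R : realType) (x : 'cV[R]_n),
        (nnz x <= k)%N ->
        (ratr eps : R) * sqnorm2 x <= sqnorm2 (map_mx ratr A *m x).
Proof.
exists 22%N, 2%N => m n A k k0 kn Hsp.
have n0 : (0 < n)%N by apply: leq_trans kn.
have m0 : (0 < m)%N.
  case: m A Hsp => // A Hsp.
  pose i0 : 'I_n := Ordinal n0.
  have := Hsp (delta_mx i0 ord0) _ _.
  rewrite nnz_delta ltnNge k0 => h.
  have hd : delta_mx i0 ord0 != 0 :> 'cV[rat]_n.
    apply/negP => /eqP h0; have := congr1 (fun M : 'cV[rat]_n => M i0 ord0) h0.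
    by rewrite /= !mxE !eqxx /= => /eqP; rewrite oner_eq0.
  have hA : A *m (delta_mx i0 ord0 : 'cV[rat]_n) = 0 by apply: flatmx0.
  by have := h hd hA.
set N := enc_mx A.
have hmn : (m * n <= N)%N by rewrite /N /enc_mx leq_addr.
have hn : (n <= N)%N by apply: leq_trans hmn; rewrite leq_pmull.
have hm : (m <= N)%N by apply: leq_trans hmn; rewrite leq_pmulr.
have N0 : (0 < N)%N by apply: leq_trans hn.
pose P := (18 * N * N)%N.
pose q : int := Posz (2 ^ P).
have q0 : q != 0 by rewrite /q -lt0n expn_gt0.
exists (1%:~R / q%:~R); split; [|split].
- by rewrite divr_gt0 // ltr0z /q ltz_nat expn_gt0.
- have cop : coprime `|(1 : int)| `|q| by rewrite coprime1n.
  rewrite /enc_rat (coprimeq_num cop) (coprimeq_den cop) (negPf q0).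
  rewrite gtr0_sg ?ltz_nat ?expn_gt0 // mulr1 /enc_int /q /=.
  have h1 : (up_log 2 2 = 1)%N by rewrite up_lognn.
  have h2 : (up_log 2 (2 ^ P).+1 <= P.+1)%N.
    by apply: up_log_min => //; rewrite expnS; have := expn_gt0 2 P; lia.
  rewrite h1; rewrite /P in h2 *; nia.
move=> R x hx.
have D0 : Dz A != 0 by rewrite gt_eqF // Dz_gt0.
have [S [HS Hle]] := real_bound Hsp D0 (@HBz m n A) hx.
have K0 : (0 : int) <= Posz (2 ^ N) by [].
have HK : forall i j, `|Bzz A i j| <= Posz (2 ^ N).
  move=> i j; rewrite -abszE lez_nat; apply: leq_trans (Bz_le A i j) _.
  by apply: leq_pexp2l => //; exact: Esum_le.
have hT : frob (\adj (Mz (Bzz A) S)) * frob (BS (Bzz A) S)^T * Dz A ^+ 2 <= q.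
  have e : Dz A = Posz (absz (Dz A)) by rewrite gez0_abs // ltW // Dz_gt0.
  rewrite e; apply: le_trans (T_bound (Posz (absz (Dz A))) S K0 HK) _.
  apply: T_num => //; apply: leq_trans (Dz_le A) _.
  by apply: leq_pexp2l => //; exact: Esum_le.
have qpos : (0 : R) < q%:~R by rewrite ltr0z /q ltz_nat expn_gt0.
have r : ratr (1%:~R / q%:~R) = (q%:~R : R)^-1.
  by rewrite fmorph_div !rmorph_int div1r.
have hq : ((frob (\adj (Mz (Bzz A) S)) * frob (BS (Bzz A) S)^T * Dz A ^+ 2)%:~R : R)
   <= q%:~R by rewrite ler_int.
have s0 := sqnorm_ge0 (map_mx ratr A *m x).
have h := le_trans Hle (ler_wpM2r s0 hq).
by rewrite r -(ler_pM2l qpos) mulrA mulfV ?mul1r ?gt_eqF.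
Qed.
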